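(* Let $R$ be an associative ring with identity, $M$ a left $R$-module and $P\leq M$ a submodule. If $\eta^M_P$ is a prime preradical and $\eta^M_P(M)\neq M$, then $\eta^M_P(M)\in Spec(\Lambda^{fi}(M))$. Moreover, $\eta^M_P(M)$ is the largest element of $Spec(\Lambda^{fi}(M))$ contained in $P$.
   Context: A preradical $r$ on $R$-Mod is a subfunctor of the identity functor: it assigns to each module $X$ a submodule $r(X)$ with $f(r(X))\subseteq r(Y)$ for every homomorphism $f\colon X\to Y$. Preradicals are ordered by $r\preceq s$ iff $r(X)\subseteq s(X)$ for all $X$; the product is $(r\cdot s)(X)=r(s(X))$; $\underline{1}$ is the identity functor. A preradical $r$ is prime if $r\neq\underline{1}$ and whenever $s\cdot t\preceq r$ for preradicals $s,t$, then $s\preceq r$ or $t\preceq r$. For $P\leq M$, $\eta^M_P(L)=\bigcap\{f^{-1}(P)\mid f\in\mathrm{Hom}_R(L,M)\}$ for each module $L$. $\Lambda^{fi}(M)$ is the set of fully invariant submodules of $M$. For $N,L\leq M$, $N_ML=\sum\{f(N)\mid f\in\mathrm{Hom}_R(M,L)\}$. $Spec(\Lambda^{fi}(M))$ is the set of $Q\in\Lambda^{fi}(M)$ with $Q\neq M$ such that for all $N,L\in\Lambda^{fi}(M)$, $N_ML\subseteq Q$ implies $N\subseteq Q$ or $L\subseteq Q$. *)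

(* Defs.v *)
From HB Require Import structures.
From mathcomp Require Import all_boot all_algebra.
From mathcomp Require Import boolp.
Unset Printing Implicit Defensive.
Import GRing.Theory.
Local Open Scope ring_scope.

Definition subset_of (X : Type) := X -> Prop.

Definition incl {X : Type} (A B : subset_of X) := forall x, A x -> B x.

Definition is_submod {R : pzRingType} {X : lmodType R} (S : subset_of X) :=
  [/\ S 0, (forall x y, S x -> S y -> S (x + y)) & (forall (a : R) x, S x -> S (a *: x))].

Section SubModule.
Variables (R : pzRingType) (X : lmodType R) (S : subset_of X) (HS : is_submod S).

Definition submod_car := {x : X | S x}.
HB.instance Definition _ := gen_eqMixin submod_car.
HB.instance Definition _ := gen_choiceMixin submod_car.

Let S0 : S 0. Proof. by case: HS. Qed.
Let SD {x y} : S x -> S y -> S (x + y). Proof. by case: HS => _ H _; apply: H. Qed.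
Let SZ (a : R) {x} : S x -> S (a *: x). Proof. by case: HS => _ _ H; apply: H. Qed.
Let SN {x} : S x -> S (- x). Proof. by move=> Sx; rewrite -scaleN1r; apply: SZ. Qed.

Definition sm_zero : submod_car := exist _ 0 S0.
Definition sm_add (u v : submod_car) : submod_car :=
  exist _ (proj1_sig u + proj1_sig v) (SD (proj2_sig u) (proj2_sig v)).
Definition sm_opp (u : submod_car) : submod_car :=
  exist _ (- proj1_sig u) (SN (proj2_sig u)).
Definition sm_scale (a : R) (u : submod_car) : submod_car :=
  exist _ (a *: proj1_sig u) (SZ a (proj2_sig u)).

Let sm_eq (u v : submod_car) : proj1_sig u = proj1_sig v -> u = v.
Proof.
case: u v => [u Su] [v Sv] /= E; subst v.
by rewrite (Prop_irrelevance Su Sv).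
Qed.

Let sm_addA : associative sm_add.
Proof. by move=> u v w; apply: sm_eq; rewrite /= addrA. Qed.
Let sm_addC : commutative sm_add.
Proof. by move=> u v; apply: sm_eq; rewrite /= addrC. Qed.
Let sm_add0 : left_id sm_zero sm_add.
Proof. by move=> u; apply: sm_eq; rewrite /= add0r. Qed.
Let sm_addN : left_inverse sm_zero sm_opp sm_add.
Proof. by move=> u; apply: sm_eq; rewrite /= addNr. Qed.

HB.instance Definition _ :=
  GRing.isZmodule.Build submod_car sm_addA sm_addC sm_add0 sm_addN.

Let sm_scaleA a b v : sm_scale a (sm_scale b v) = sm_scale (a * b) v.
Proof. by apply: sm_eq; rewrite /= scalerA. Qed.
Let sm_scale1 : left_id 1 sm_scale.
Proof. by move=> v; apply: sm_eq; rewrite /= scale1r. Qed.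
Let sm_scaleDr : right_distributive sm_scale +%R.
Proof. by move=> a u v; apply: sm_eq; rewrite /= scalerDr. Qed.
Let sm_scaleDl v : {morph sm_scale^~ v: a b / a + b}.
Proof. by move=> a b; apply: sm_eq; rewrite /= scalerDl. Qed.

HB.instance Definition _ :=
  GRing.Zmodule_isLmodule.Build R submod_car sm_scaleA sm_scale1 sm_scaleDr sm_scaleDl.

Definition submodType : lmodType R := submod_car.

End SubModule.
Arguments submodType {R X S} HS.


Section Preradicals.
Variable R : pzRingType.

Definition family := forall X : lmodType R, subset_of X.

Definition is_preradical (r : family) :=
  (forall X : lmodType R, is_submod (r X)) /\
  (forall (X Y : lmodType R) (f : {linear X -> Y}) (x : X), r X x -> r Y (f x)).

Record preradical := Preradical {
  pr_fun :> family;
  pr_prop : is_preradical pr_fun }.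

Lemma pr_submod (r : preradical) (X : lmodType R) : is_submod (pr_fun r X).
Proof. exact (proj1 (pr_prop r) X). Qed.

Definition pr_le (r s : family) := forall X : lmodType R, incl (r X) (s X).

(* (r . s)(X) = r(s(X)), seen as a submodule of X *)
Definition pr_prod (r s : preradical) : family :=
  fun X x => exists y : submodType (pr_submod s X),
    pr_fun r (submodType (pr_submod s X)) y /\ proj1_sig y = x.

Definition pr_one : family := fun X _ => True.

Definition prime_preradical (r : family) :=
  [/\ is_preradical r,
      ~ (forall X : lmodType R, r X = pr_one X) &
      forall s t : preradical, pr_le (pr_prod s t) r -> pr_le (pr_fun s) r \/ pr_le (pr_fun t) r].

Definition etaMP (M : lmodType R) (P : subset_of M) : family :=
  fun L x => forall f : {linear L -> M}, P (f x).

Definition fully_invariant (M : lmodType R) (N : subset_of M) :=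
  is_submod N /\ forall (f : {linear M -> M}) x, N x -> N (f x).

(* submodule generated by a subset (sums of submodules are the submodule
   generated by their union) *)
Definition gen_submod (M : lmodType R) (A : subset_of M) : subset_of M :=
  fun x => forall T : subset_of M, is_submod T -> incl A T -> T x.

(* N_M L = sum { f(N) | f in Hom_R(M, L) } *)
Definition NML (M : lmodType R) (N L : subset_of M) (HL : is_submod L) : subset_of M :=
  gen_submod M (fun x => exists (f : {linear M -> submodType HL}) (n : M),
                 N n /\ proj1_sig (f n) = x).

Definition in_Spec_fi (M : lmodType R) (Q : subset_of M) :=
  [/\ fully_invariant M Q, Q <> pr_one M &
      forall (N L : subset_of M) (HN : fully_invariant M N) (HL : fully_invariant M L),
        incl (NML M N L (proj1 HL)) Q -> incl N Q \/ incl L Q].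

End Preradicals.
Arguments pr_fun {R} p X.
Arguments is_preradical {R} r.
Arguments pr_submod {R} r X.
Arguments pr_le {R} r s.
Arguments pr_prod {R} r s X x.
Arguments prime_preradical {R} r.
Arguments fully_invariant {R M} N.
Arguments gen_submod {R M} A x.
Arguments NML {R M} N L HL x.
Arguments in_Spec_fi {R M} Q.
Arguments etaMP {R M} P X.
Arguments pr_one {R} X.

(* Main.v *)
Require Import Defs.
From HB Require Import structures.
From mathcomp Require Import all_boot all_algebra.
From mathcomp Require Import boolp.
Import GRing.Theory.
Local Open Scope ring_scope.

Section Lin.
Variables (R : pzRingType) (X Y : lmodType R) (S : subset_of X) (HS : is_submod S).

Definition sproj (u : submodType HS) : X := proj1_sig u.
Lemma sproj_lin : linear sproj.
Proof. by []. Qed.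
HB.instance Definition _ := GRing.isLinear.Build R (submodType HS) X *:%R sproj sproj_lin.

Lemma sm_eqE (u v : submodType HS) : proj1_sig u = proj1_sig v -> u = v.
Proof. case: u v => [u Su] [v Sv] /= E; subst v. by rewrite (Prop_irrelevance Su Sv). Qed.

Variables (f : {linear Y -> X}) (Hf : forall y, S (f y)).
Definition corestr (y : Y) : submodType HS := exist _ (f y) (Hf y).
Lemma corestr_lin : linear corestr.
Proof. move=> a u v; apply: sm_eqE => /=. by rewrite linearP. Qed.
HB.instance Definition _ := GRing.isLinear.Build R Y (submodType HS) *:%R corestr corestr_lin.
End Lin.

Section Gen.
Variable (R : pzRingType).

Lemma gen_submod_is (X : lmodType R) (A : subset_of X) : is_submod (gen_submod A).
Proof.
split.
- by move=> T [T0 _ _] _.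
- by move=> x y Hx Hy T HT HA; case: (HT) => _ HD _; apply: HD; [apply: Hx|apply: Hy].
- by move=> a x Hx T HT HA; case: (HT) => _ _ HZ; apply: HZ; apply: Hx.
Qed.

Lemma gen_in (X : lmodType R) (A : subset_of X) x : A x -> gen_submod A x.
Proof. by move=> Ax T _ HA; apply: HA. Qed.

Lemma gen_min (X : lmodType R) (A T : subset_of X) :
  is_submod T -> incl A T -> incl (gen_submod A) T.
Proof. by move=> HT HA x Hx; apply: Hx. Qed.

Lemma preim_submod (X Y : lmodType R) (f : {linear X -> Y}) (T : subset_of Y) :
  is_submod T -> is_submod (fun x => T (f x)).
Proof.
case=> T0 TD TZ; split.
- by rewrite linear0.
- by move=> x y Hx Hy; rewrite linearD; apply: TD.
- by move=> a x Hx; rewrite linearZ; apply: TZ.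
Qed.

Definition alpha (M : lmodType R) (N : subset_of M) : Defs.family R :=
  fun X => gen_submod (fun x => exists (g : {linear M -> X}) n, N n /\ g n = x).

Lemma alpha_pr (M : lmodType R) (N : subset_of M) : is_preradical (alpha M N).
Proof.
split; first by move=> X; apply: gen_submod_is.
move=> X Y f x Hx.
apply: (@gen_min _ _ (fun x => alpha M N Y (f x))) Hx.
  by apply: preim_submod; apply: gen_submod_is.
move=> _ [g [n [Nn <-]]]; apply: gen_in; exists (f \o g), n; split => //.
Qed.

Definition alphaP (M : lmodType R) (N : subset_of M) : preradical R :=
  @Preradical R _ (alpha_pr M N).

Lemma alpha_self (M : lmodType R) (N : subset_of M) : incl N (alpha M N M).
Proof. by move=> x Nx; apply: gen_in; exists idfun, x. Qed.
End Gen.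
Arguments alpha {R M} N X x.
Arguments alphaP {R M} N.
Arguments gen_min {R X A T}.
Arguments sproj {R X S} HS.
Arguments corestr {R X Y S} HS f Hf.
Arguments preim_submod {R X Y} f {T}.

Theorem proposition4p9 (R : pzRingType) (M : lmodType R) (P : subset_of M) :
  is_submod P ->
  prime_preradical (etaMP P) ->
  etaMP P M <> pr_one M ->
  [/\ in_Spec_fi (etaMP P M),
      incl (etaMP P M) P &
      forall Q : subset_of M, in_Spec_fi Q -> incl Q P -> incl Q (etaMP P M)].
Proof.
move=> HP [[Hsub Hfun] _ Hprime] Hne.
have etaP : incl (etaMP P M) P by move=> x Hx; apply: (Hx idfun).
have FI : fully_invariant (etaMP P M).
  by split; [apply: Hsub | move=> f x Hx; apply: Hfun].
split => //; last first.
  move=> Q [[_ HQ] _ _] QP x Qx f; apply: QP; by apply: HQ.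
split => //.
move=> N L HN HL HNL.
have Hle : pr_le (pr_prod (alphaP N) (alphaP L)) (etaMP P).
  move=> X x [y [Hy <-]].
  set HX := pr_submod (alphaP L) X.
  apply: (@gen_min _ _ _ (fun y : submodType HX => etaMP P X (sproj HX y))) Hy.
    by apply: preim_submod; apply: Hsub.
  move=> _ [g [n [Nn <-]]] h.
  have HhL : forall m, L (h (sproj HX (g m))).
    move=> m.
    have Hm : alpha L X (sproj HX (g m)) by exact: (proj2_sig (g m)).
    apply: (@gen_min _ _ _ (fun x => L (h x))) Hm.
      by apply: preim_submod; case: (HL).
    move=> _ [g' [l [Ll <-]]].
    by case: (HL) => _ HL2; apply: (HL2 (h \o g')).
  pose k := corestr (proj1 HL) (h \o sproj HX \o g) HhL.
  apply: etaP; apply: HNL; apply: gen_in; exists k, n; split => //.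
case: (Hprime _ _ Hle) => H; [left|right] => x Hx; apply: H; exact: alpha_self.
Qed.
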